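(* Let $\varphi$ be a Boolean formula in 3-CNF and let $G$ be the graph constructed from $\varphi$ as described in the context. Let $X\subseteq V(G)$ be a minimum cluster deletion set of $G$. Then, for every variable gadget of $G$ (i.e., every $j\in\{1,\dots,n\}$), $X$ contains all vertices of one of the two sides $T_{1,j},T_{2,j}$.
   Context: Let $\varphi$ consist of clauses $C_1,\dots,C_m$ over variables $x_1,\dots,x_n$, each clause containing exactly three literals, $C_i=(L_i^1\vee L_i^2\vee L_i^3)$. The graph $G$ has vertex set $\{u_{r,s,i}: r\in\{1,2,3\}, s\in\{1,\dots,7\}, i\in\{1,\dots,m\}\}\cup\{v_{r,s,j}: r\in\{1,2\}, s\in\{1,2,3\}, j\in\{1,\dots,n\}\}$ and edge set consisting of: $\{u_{r,s,i},u_{r',s',i}\}$ for all $r\ne r'$ in $\{1,2,3\}$, all $s,s'\in\{1,\dots,7\}$, all $i$; $\{v_{1,s,j},v_{2,s',j}\}$ for all $s,s'\in\{1,2,3\}$, all $j$; $\{u_{r,s,i},v_{1,s',j}\}$ for all $s\in\{1,\dots,7\}$, $s'\in\{1,2,3\}$ whenever $L_i^r = x_j$; and $\{u_{r,s,i},v_{2,s',j}\}$ for all $s\in\{1,\dots,7\}$, $s'\in\{1,2,3\}$ whenever $L_i^r=\neg x_j$. The clause gadget of $C_i$ has sides $S_{r,i}=\{u_{r,s,i}: s\in\{1,\dots,7\}\}$, $r=1,2,3$; the variable gadget of $x_j$ is the complete bipartite graph on $\{v_{r,s,j}\}$ with sides $T_{r,j}=\{v_{r,s,j}: s\in\{1,2,3\}\}$,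 $r=1,2$. A cluster deletion set of $G$ is a set $X\subseteq V(G)$ such that $G-X$ contains no induced path on three vertices; it is minimum if it has the smallest possible size. *)

(* Defs.v *)
From mathcomp Require Import all_boot.
Set Implicit Arguments. Unset Strict Implicit. Unset Printing Implicit Defensive.

(* A literal over variables x_0..x_{n-1}: (variable index, polarity);
   polarity true = positive literal x_j, false = negative literal ~x_j. *)
Definition literal (n : nat) := ('I_n * bool)%type.

(* A 3-CNF formula with m clauses over n variables: clause i has literals
   phi i 0, phi i 1, phi i 2 (the paper's L_i^1, L_i^2, L_i^3). *)
Definition cnf3 (n m : nat) := 'I_m -> 'I_3 -> literal n.

(* Vertices: inl (r,s,i) = u_{r,s,i}, inr (r,s,j) = v_{r,s,j}  (0-based). *)
Definition vert (n m : nat) :=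
  (('I_3 * 'I_7 * 'I_m) + ('I_2 * 'I_3 * 'I_n))%type.

(* u_{r,s,i} ~ v_{r',s',j} iff literal L_i^r is on x_j and
   r' = side 1 (index 0) for a positive literal, side 2 (index 1) for negative. *)
Definition uv_adj n m (phi : cnf3 n m) (r : 'I_3) (i : 'I_m) (r' : 'I_2) (j : 'I_n) : bool :=
  ((phi i r).1 == j) && (nat_of_ord r' == (if (phi i r).2 then 0 else 1)).

Definition gadj n m (phi : cnf3 n m) (x y : vert n m) : bool :=
  match x, y with
  | inl (r, _, i), inl (r', _, i') => (i == i') && (r != r')
  | inr (r, _, j), inr (r', _, j') => (j == j') && (r != r')
  | inl (r, _, i), inr (r', _, j) => uv_adj phi r i r' j
  | inr (r', _, j), inl (r, _, i) => uv_adj phi r i r' j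
  end.

Definition cluster_deletion_set n m (phi : cnf3 n m) (X : {set vert n m}) : Prop :=
  forall x y z : vert n m,
    x \notin X -> y \notin X -> z \notin X ->
    x != z -> gadj phi x y -> gadj phi y z -> gadj phi x z.

Definition min_cluster_deletion_set n m (phi : cnf3 n m) (X : {set vert n m}) : Prop :=
  cluster_deletion_set phi X /\
  forall Y : {set vert n m}, cluster_deletion_set phi Y -> #|X| <= #|Y|.

Definition side n m (r : 'I_2) (j : 'I_n) : {set vert n m} :=
  [set x : vert n m | if x is inr (r', _, j') then (r' == r) && (j' == j) else false].

(* Main.v *)
Require Import Defs.
From mathcomp Require Import all_boot.
From mathcomp Require Import zify.

Set Implicit Arguments. Unset Strict Implicit.

Lemma gadj_sym n m (phi : cnf3 n m) x y : gadj phi x y = gadj phi y x.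
Proof.
case: x => [[[r s] i]|[[r s] i]]; case: y => [[[r' s'] i']|[[r' s'] i']] //=;
by rewrite eq_sym [r' == r]eq_sym.
Qed.

Lemma side_card n m (r : 'I_2) (j : 'I_n) : #|side m r j| = 3.
Proof.
have -> : side m r j = [set (inr (r, s, j) : vert n m) | s : 'I_3].
  apply/setP => x; rewrite inE.
  case: x => [[[r1 s] i]|[[r1 s] i]].
    by apply/esym/imsetP => -[y _].
  apply/idP/imsetP.
    by case/andP => /eqP -> /eqP ->; exists s.
  by case=> y _ [-> _ ->]; rewrite !eqxx.
by rewrite card_imset ?card_ord // => a b [].
Qed.

Lemma side_inr n m (r : 'I_2) (j : 'I_n) x :
  x \in side m r j -> exists s, x = inr (r, s, j).
Proof.
rewrite inE; case: x => [[[r1 s] i]|[[r1 s] i]] //.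
by case/andP => /eqP -> /eqP ->; exists s.
Qed.

Lemma inr_side n m (r : 'I_2) (j : 'I_n) s :
  (inr (r, s, j) : vert n m) \in side m r j.
Proof. by rewrite inE !eqxx. Qed.

Lemma side_le1 n m (phi : cnf3 n m) X (r r' : 'I_2) (j : 'I_n) c :
  cluster_deletion_set phi X -> r != r' -> c \in side m r' j -> c \notin X ->
  #|side m r j :\: X| <= 1.
Proof.
move=> HX rr' /side_inr [sc ->] cX.
rewrite leqNgt; apply/negP => /card_gt1P [x [y [/setDP [xS xX] /setDP [yS yX] xy]]].
case/side_inr: xS => sx ?; case/side_inr: yS => sy ?; subst x y.
have := HX _ _ _ xX cX yX xy; rewrite /= eqxx rr' eq_sym rr' eqxx /=; by move=> H; have := H isT isT.
Qed.

Theorem lemma11 (n m : nat) (phi : cnf3 n m) (X : {set vert n m}) :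
  min_cluster_deletion_set phi X ->
  forall j : 'I_n, exists r : 'I_2, side m r j \subset X.
Proof.
move=> [HX Hmin] j.
pose o0 : 'I_2 := ord0. pose o1 : 'I_2 := @Ordinal 2 1 isT.
have o01 : o0 != o1 by [].
case: (boolP (side m o0 j \subset X)) => [H|/subsetPn [a aT aX]]; first by exists o0.
case: (boolP (side m o1 j \subset X)) => [H|/subsetPn [b bT bX]]; first by exists o1.
exfalso.
set T1 := side m o0 j in aT *. set T2 := side m o1 j in bT *.
have c1 : #|T1 :\: X| <= 1 by apply: (side_le1 HX o01 bT bX).
have c2 : #|T2 :\: X| <= 1 by apply: (side_le1 HX _ aT aX); rewrite eq_sym.
case/side_inr: aT => sa ea. case/side_inr: bT => sb eb.
have stepB : forall r s i, (inl (r, s, i) : vert n m) \notin X ->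
    ~~ uv_adj phi r i o1 j.
  move=> r s i tX; apply/negP => Hu.
  have := HX (inl (r, s, i)) b a tX bX aX.
  rewrite ea eb /= Hu /= eqxx => H; move: (H isT isT isT) Hu; rewrite /uv_adj; by case: (phi i r).2 => /andP[_ /eqP] /= + /andP[_ /eqP] /=.
pose Y := (X :\: T2) :|: (T1 :\: X).
have Ycl : cluster_deletion_set phi Y.
  have notY : forall w, w \notin Y -> w \notin T1 /\ (w \in T2 \/ w \notin X).
    move=> w; rewrite !in_setU !in_setD negb_or !negb_and !negbK.
    case/andP => /orP [w2|wX] /orP [wX'|w1].
    - split; [|by left].
      by case/side_inr: w2 => s ->; rewrite inE.
    - by split; [|left].
    - by rewrite wX' in wX.
    - by split; [|right].
  have T2nb : forall w t, w \notin Y -> w \in T2 -> t \notin Y -> ~~ gadj phi w t.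
    move=> w t wY /side_inr [s ->] tY; apply/negP.
    case: (notY _ tY) => tT1 tX.
    case: t tY tT1 tX => [[[r s'] i]|[[r' s'] j']] tY tT1 tX /=.
      case: tX => [/side_inr [? //]|tX].
      by move/negP: (stepB _ _ _ tX).
    case/andP => /eqP ej.
    move=> H; have er : r' = o0.
      by apply/val_inj; move: H; case: r' {tY tT1 tX} => [[|[|k]] Hk].
    by subst j' r'; rewrite inE !eqxx in tT1.
  move=> x y z xY yY zY xz Hxy Hyz.
  case: (notY _ xY) => _ [x2|xX]; first by rewrite (negbTE (T2nb _ _ xY x2 yY)) in Hxy.
  case: (notY _ yY) => _ [y2|yX]; first by rewrite gadj_sym (negbTE (T2nb _ _ yY y2 xY)) in Hxy.
  case: (notY _ zY) => _ [z2|zX]; first by rewrite gadj_sym (negbTE (T2nb _ _ zY z2 yY)) in Hyz.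
  exact: (HX x y z xX yX zX xz Hxy Hyz).
have := Hmin _ Ycl.
have cY : #|Y| <= #|X :\: T2| + #|T1 :\: X| by rewrite leq_card_setU.
have e1 := cardsID T2 X. have e2 := cardsID X T2.
have s2 := side_card m o1 j. rewrite -/T2 in s2.
rewrite setIC in e2.
lia.
Qed.
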